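(* Let $H$ be a complex separable Hilbert space and let $S,T\in B(H)$ be positive normal operators with Cartesian decompositions $S=A+iC$ and $T=B+iD$, where $A,B,C,D$ are self-adjoint. Suppose there are real numbers $a_1,a_2,b_1,b_2,c_1,c_2,d_1,d_2$ such that $a_1\le A\le a_2$, $b_1\le B\le b_2$, $c_1\le C\le c_2$ and $d_1\le D\le d_2$. Then $$\|ST-TS\|\le \frac12\sqrt{(a_2-a_1)^2+(c_2-c_1)^2}\,\sqrt{(b_2-b_1)^2+(d_2-d_1)^2}.$$
   Context: $B(H)$ denotes the algebra of bounded linear operators on $H$ with the operator norm. The Cartesian decomposition of $S\in B(H)$ is $S=A+iC$ with $A=\frac{S+S^*}{2}$ and $C=\frac{S-S^*}{2i}$ self-adjoint. For a self-adjoint operator $A$ and real $\alpha$, $\alpha\le A$ means $A-\alpha I$ is positive, and $A\le\alpha$ means $\alpha I-A$ is positive. *)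

(* Defs.v *)
From HB Require Import structures.
From mathcomp Require Import all_boot all_order all_algebra.
From mathcomp Require Import complex.
From mathcomp Require Import reals.
Set Implicit Arguments. Unset Strict Implicit. Unset Printing Implicit Defensive.
Import Order.TTheory GRing.Theory Num.Theory.
Local Open Scope ring_scope.

Section Hilbert.
Variables (R : realType) (V : lmodType R[i]) (ip : V -> V -> R[i]).

(* inner product: linear in the first argument, conjugate symmetric,
   positive definite (0 <= z in R[i] means z is real and nonnegative) *)
Definition inner_product : Prop :=
  [/\ forall (a : R[i]) (x y z : V), ip (a *: x + y) z = a * ip x z + ip y z,
      forall x y : V, ip y x = Num.conj (ip x y),
      forall x : V, 0 <= ip x x &
      forall x : V, ip x x = 0 -> x = 0].

Definition hnorm (x : V) : R := Num.sqrt (complex.Re (ip x x)).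

Definition hcomplete : Prop :=
  forall u : nat -> V,
    (forall e : R, 0 < e -> exists N : nat, forall m n : nat,
        (N <= m)%N -> (N <= n)%N -> hnorm (u m - u n) < e) ->
    exists l : V, forall e : R, 0 < e -> exists N : nat, forall n : nat,
        (N <= n)%N -> hnorm (u n - l) < e.

Definition hseparable : Prop :=
  exists d : nat -> V, forall (x : V) (e : R), 0 < e ->
    exists n : nat, hnorm (x - d n) < e.

Definition separable_hilbert_space : Prop :=
  [/\ inner_product, hcomplete & hseparable].

Definition bounded_op (f : V -> V) : Prop :=
  (forall (a : R[i]) (x y : V), f (a *: x + y) = a *: f x + f y) /\
  exists M : R, forall x : V, hnorm (f x) <= M * hnorm x.

Definition is_adjoint (f g : V -> V) : Prop :=
  forall x y : V, ip (f x) y = ip x (g y).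

Definition self_adjoint (f : V -> V) : Prop := is_adjoint f f.

Definition normal_op (f : V -> V) : Prop :=
  exists g : V -> V, [/\ bounded_op g, is_adjoint f g &
                        forall x : V, f (g x) = g (f x)].

Definition positive_op (f : V -> V) : Prop :=
  forall x : V, 0 <= ip (f x) x.

Definition op_ge (f : V -> V) (alpha : R) : Prop :=
  positive_op (fun x => f x - (alpha%:C)%C *: x).

Definition op_le (f : V -> V) (alpha : R) : Prop :=
  positive_op (fun x => (alpha%:C)%C *: x - f x).

Definition opnorm (f : V -> V) : R :=
  sup (fun r : R => exists x : V, hnorm x <= 1 /\ r = hnorm (f x)).

End Hilbert.

(* Main.v *)
Require Import Defs.
From HB Require Import structures.
From mathcomp Require Import all_boot all_order all_algebra.
From mathcomp Require Import complex.
From mathcomp Require Import reals.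
From mathcomp Require Import ring lra.
Import Order.TTheory GRing.Theory Num.Theory.
Local Open Scope ring_scope.

Lemma cReD {R : realType} (z w : R[i]) : complex.Re (z + w) = complex.Re z + complex.Re w.
Proof. by case: z; case: w. Qed.
Lemma cImD {R : realType} (z w : R[i]) : complex.Im (z + w) = complex.Im z + complex.Im w.
Proof. by case: z; case: w. Qed.
Lemma cReMr {R : realType} (r : R) (z : R[i]) : complex.Re ((r%:C)%C * z) = r * complex.Re z.
Proof. by case: z => a b /=; rewrite mul0r subr0. Qed.
Lemma cImMi {R : realType} (z : R[i]) : complex.Im ('i%C * z) = complex.Re z.
Proof. by case: z => a b /=; rewrite mul0r mul1r add0r. Qed.
Lemma cReJ {R : realType} (z : R[i]) : complex.Re (Num.conj z) = complex.Re z.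
Proof. by case: z. Qed.
Lemma cImJ {R : realType} (z : R[i]) : complex.Im (Num.conj z) = - complex.Im z.
Proof. by case: z. Qed.
Lemma cge0 {R : realType} (z : R[i]) : 0 <= z -> complex.Im z = 0 /\ 0 <= complex.Re z.
Proof. by rewrite lecE => /andP [/eqP -> ->]. Qed.
Lemma ceq0 {R : realType} (z : R[i]) : complex.Im z = 0 -> complex.Re z = 0 -> z = 0.
Proof. by case: z => a b /= -> ->. Qed.

Definition Qf {R : realType} {V : lmodType R[i]} (ip : V -> V -> R[i]) (x y : V) : R :=
  complex.Re (ip x y).

Definition lin {R : realType} {V : lmodType R[i]} (F : V -> V) :=
  forall (a : R[i]) (x y : V), F (a *: x + y) = a *: F x + F y.

Lemma ip0l {R : realType} {V : lmodType R[i]} {ip : V -> V -> R[i]}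
  (Hip : inner_product ip) (z : V) : ip 0 z = 0.
Proof.
case: Hip => H1 _ _ _.
have h := H1 1 0 0 z. rewrite scale1r addr0 mul1r in h.
by apply: (addrI (ip 0 z)); rewrite addr0 -h.
Qed.

Lemma ipDl {R : realType} {V : lmodType R[i]} {ip : V -> V -> R[i]}
  (Hip : inner_product ip) (x y z : V) : ip (x + y) z = ip x z + ip y z.
Proof. case: Hip => H1 _ _ _. by have := H1 1 x y z; rewrite scale1r mul1r. Qed.

Lemma ipZl {R : realType} {V : lmodType R[i]} {ip : V -> V -> R[i]}
  (Hip : inner_product ip) a (x z : V) : ip (a *: x) z = a * ip x z.
Proof.
have := (let: And4 H1 _ _ _ := Hip in H1) a x 0 z.
by rewrite addr0 (ip0l Hip) addr0.
Qed.



Lemma Q0l {R : realType} {V : lmodType R[i]} {ip : V -> V -> R[i]}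
  (Hip : inner_product ip) (z : V) : Qf ip 0 z = 0.
Proof. by rewrite /Qf (ip0l Hip). Qed.
Lemma QDl {R : realType} {V : lmodType R[i]} {ip : V -> V -> R[i]}
  (Hip : inner_product ip) (x y z : V) : Qf ip (x + y) z = Qf ip x z + Qf ip y z.
Proof. by rewrite /Qf (ipDl Hip) cReD. Qed.
Lemma QZl {R : realType} {V : lmodType R[i]} {ip : V -> V -> R[i]}
  (Hip : inner_product ip) (r : R) (x z : V) : Qf ip ((r%:C)%C *: x) z = r * Qf ip x z.
Proof. by rewrite /Qf (ipZl Hip) cReMr. Qed.
Lemma Qsym {R : realType} {V : lmodType R[i]} {ip : V -> V -> R[i]}
  (Hip : inner_product ip) (x y : V) : Qf ip x y = Qf ip y x.
Proof. case: Hip => _ H2 _ _. by rewrite /Qf (H2 x y) cReJ. Qed.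
Lemma QNl {R : realType} {V : lmodType R[i]} {ip : V -> V -> R[i]}
  (Hip : inner_product ip) (x z : V) : Qf ip (- x) z = - Qf ip x z.
Proof. by apply/eqP; rewrite -addr_eq0 -(QDl Hip) addNr (Q0l Hip). Qed.
Lemma QBl {R : realType} {V : lmodType R[i]} {ip : V -> V -> R[i]}
  (Hip : inner_product ip) (x y z : V) : Qf ip (x - y) z = Qf ip x z - Qf ip y z.
Proof. by rewrite (QDl Hip) (QNl Hip). Qed.
Lemma QDr {R : realType} {V : lmodType R[i]} {ip : V -> V -> R[i]}
  (Hip : inner_product ip) (x y z : V) : Qf ip z (x + y) = Qf ip z x + Qf ip z y.
Proof. by rewrite (Qsym Hip) (QDl Hip) (Qsym Hip x) (Qsym Hip y). Qed.
Lemma QBr {R : realType} {V : lmodType R[i]} {ip : V -> V -> R[i]}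
  (Hip : inner_product ip) (x y z : V) : Qf ip z (x - y) = Qf ip z x - Qf ip z y.
Proof. by rewrite (Qsym Hip) (QBl Hip) (Qsym Hip x) (Qsym Hip y). Qed.
Lemma QZr {R : realType} {V : lmodType R[i]} {ip : V -> V -> R[i]}
  (Hip : inner_product ip) (r : R) (x z : V) : Qf ip z ((r%:C)%C *: x) = r * Qf ip z x.
Proof. by rewrite (Qsym Hip) (QZl Hip) (Qsym Hip x). Qed.
Lemma Nge0 {R : realType} {V : lmodType R[i]} {ip : V -> V -> R[i]}
  (Hip : inner_product ip) (x : V) : 0 <= Qf ip x x.
Proof. case: Hip => _ _ H3 _. rewrite /Qf. exact: (cge0 _ (H3 x)).2. Qed.
Lemma Neq0 {R : realType} {V : lmodType R[i]} {ip : V -> V -> R[i]}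
  (Hip : inner_product ip) (x : V) : Qf ip x x = 0 -> x = 0.
Proof. case: Hip => _ _ H3 H4 h. apply: H4; apply: ceq0 => //. exact: (cge0 _ (H3 x)).1. Qed.

Lemma Qexp {R : realType} {V : lmodType R[i]} {ip : V -> V -> R[i]}
  (Hip : inner_product ip) (a b : R) (y z y' z' : V) :
  Qf ip ((a%:C)%C *: y + (b%:C)%C *: z) ((a%:C)%C *: y' + (b%:C)%C *: z') =
  a^+2 * Qf ip y y' + a * b * (Qf ip y z' + Qf ip z y') + b^+2 * Qf ip z z'.
Proof.
rewrite !(QDl Hip) !(QDr Hip) !(QZl Hip) !(QZr Hip). ring.
Qed.

Lemma linF0 {R : realType} {V : lmodType R[i]} {F : V -> V} : lin F -> F 0 = 0.
Proof.
move=> hF. have h := hF 1 0 0. rewrite !scale1r addr0 in h.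
by apply: (addrI (F 0)); rewrite addr0 -h.
Qed.
Lemma linD {R : realType} {V : lmodType R[i]} {F : V -> V} : lin F -> forall x y, F (x + y) = F x + F y.
Proof. by move=> hF x y; have := hF 1 x y; rewrite !scale1r. Qed.
Lemma linZ {R : realType} {V : lmodType R[i]} {F : V -> V} : lin F -> forall a x, F (a *: x) = a *: F x.
Proof. by move=> hF a x; have := hF a x 0; rewrite addr0 (linF0 hF) addr0. Qed.
Lemma linN {R : realType} {V : lmodType R[i]} {F : V -> V} : lin F -> forall x, F (- x) = - F x.
Proof. by move=> hF x; rewrite -scaleN1r (linZ hF) scaleN1r. Qed.
Lemma linB {R : realType} {V : lmodType R[i]} {F : V -> V} : lin F -> forall x y, F (x - y) = F x - F y.
Proof. by move=> hF x y; rewrite (linD hF) (linN hF). Qed.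
Lemma linS {R : realType} {V : lmodType R[i]} {F : V -> V} (c : R[i]) :
  lin F -> lin (fun y => F y - c *: y).
Proof.
move=> hF a x y /=. rewrite hF scalerDr scalerBr !scalerA (mulrC c a) opprD addrACA //.
Qed.

Lemma quad_real (R : realType) (k u v : R) : 0 <= u -> 0 <= v ->
  (forall a b : R, 2 * a * b * v <= k * (a^+2 * u + b^+2 * v)) -> v <= k^+2 * u.
Proof.
move=> hu hv h.
have h1 := h 1 1.
case: (lerP k 0) => hk.
- have : v <= 0 by nra. nra.
- have h2 := h k 1. nra.
Qed.

Lemma disc (R : realType) (a c b : R) : 0 <= a -> 0 <= c ->
  (forall s t : R, 0 <= s^+2 * a + 2 * s * t * b + t^+2 * c) -> b^+2 <= a * c.
Proof.
move=> ha hc h.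
case: (ltrP 0 a) => ha'.
  have := h b (- a). nra.
case: (ltrP 0 c) => hc'.
  have := h (- c) b. nra.
have := h b (-1). nra.
Qed.

Lemma opbound {R : realType} {V : lmodType R[i]} {ip : V -> V -> R[i]}
  (Hip : inner_product ip) (G : V -> V) (k : R) (hG : lin G)
  (sG : forall x y, Qf ip (G x) y = Qf ip x (G y))
  (hlo : forall x, - (k * Qf ip x x) <= Qf ip (G x) x)
  (hhi : forall x, Qf ip (G x) x <= k * Qf ip x x) :
  forall x, Qf ip (G x) (G x) <= k^+2 * Qf ip x x.
Proof.
move=> x. apply: quad_real; [exact: Nge0 | exact: Nge0 |] => a b.
have eG : forall s t : R, G ((s%:C)%C *: x + (t%:C)%C *: G x) = (s%:C)%C *: G x + (t%:C)%C *: G (G x).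
  by move=> s t; rewrite (linD hG) !(linZ hG).
have h1 := hhi ((a%:C)%C *: x + (b%:C)%C *: G x).
have h2 := hlo ((a%:C)%C *: x + ((-b)%:C)%C *: G x).
rewrite eG !(Qexp Hip) in h1. rewrite eG !(Qexp Hip) in h2.
rewrite (sG (G x) x) (Qsym Hip x (G x)) in h1 h2.
nra.
Qed.

Lemma CS {R : realType} {V : lmodType R[i]} {ip : V -> V -> R[i]}
  (Hip : inner_product ip) (u w : V) : Qf ip u w ^+ 2 <= Qf ip u u * Qf ip w w.
Proof.
apply: disc; [exact: Nge0 | exact: Nge0 |] => s t.
have := Nge0 Hip ((s%:C)%C *: u + (t%:C)%C *: w).
rewrite (Qexp Hip) (Qsym Hip w u). nra.
Qed.

Lemma hnE {R : realType} {V : lmodType R[i]} {ip : V -> V -> R[i]} (v : V) :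
  hnorm ip v = Num.sqrt (Qf ip v v).
Proof. by []. Qed.

Lemma hn_ge0 {R : realType} {V : lmodType R[i]} {ip : V -> V -> R[i]} (v : V) :
  0 <= hnorm ip v.
Proof. exact: sqrtr_ge0. Qed.

Lemma hn_sqr {R : realType} {V : lmodType R[i]} {ip : V -> V -> R[i]}
  (Hip : inner_product ip) (v : V) : hnorm ip v ^+ 2 = Qf ip v v.
Proof. by rewrite hnE sqr_sqrtr // (Nge0 Hip). Qed.

Lemma sqle {R : realType} (q p : R) : q ^+ 2 <= p ^+ 2 -> 0 <= p -> q <= p.
Proof. move=> h hp. nra. Qed.

Lemma CS2 {R : realType} {V : lmodType R[i]} {ip : V -> V -> R[i]}
  (Hip : inner_product ip) (u w : V) : Qf ip u w <= hnorm ip u * hnorm ip w.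
Proof.
have h := CS Hip u w.
rewrite -(hn_sqr Hip u) -(hn_sqr Hip w) -exprMn in h.
have : 0 <= hnorm ip u * hnorm ip w by rewrite mulr_ge0 // hn_ge0.
exact: sqle.
Qed.

Lemma hnN {R : realType} {V : lmodType R[i]} {ip : V -> V -> R[i]}
  (Hip : inner_product ip) (v : V) : hnorm ip (- v) = hnorm ip v.
Proof. by rewrite !hnE (QNl Hip) (Qsym Hip) (QNl Hip) opprK. Qed.

Lemma commbound {R : realType} {V : lmodType R[i]} {ip : V -> V -> R[i]}
  (Hip : inner_product ip) (X Y : V -> V) (kx ky : R) (hkx : 0 <= kx) (hky : 0 <= ky)
  (bX : forall y, hnorm ip (X y) <= kx * hnorm ip y)
  (bY : forall y, hnorm ip (Y y) <= ky * hnorm ip y)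
  (x z : V) (ez : Qf ip z z = Qf ip (Y x) (X z) - Qf ip (X x) (Y z)) :
  hnorm ip z <= 2 * kx * ky * hnorm ip x.
Proof.
have c1 := CS2 Hip (Y x) (X z).
have c2 := CS2 Hip (- X x) (Y z). rewrite (QNl Hip) (hnN Hip) in c2.
have p1 : hnorm ip (Y x) * hnorm ip (X z) <= (ky * hnorm ip x) * (kx * hnorm ip z).
  by apply: ler_pM => //; apply: hn_ge0.
have p2 : hnorm ip (X x) * hnorm ip (Y z) <= (kx * hnorm ip x) * (ky * hnorm ip z).
  by apply: ler_pM => //; apply: hn_ge0.
have ez2 := hn_sqr Hip z.
have g1 := hn_ge0 (ip:=ip) z. have g2 := hn_ge0 (ip:=ip) x.
have g3 : 0 <= 2 * kx * ky * hnorm ip x by rewrite !mulr_ge0.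
have : hnorm ip z ^+ 2 <= (2 * kx * ky * hnorm ip x) * hnorm ip z by nra.
nra.
Qed.

Lemma halfnorm {R : realType} (d e : R) : `|d / 2| <= Num.sqrt (d ^+ 2 + e ^+ 2) / 2.
Proof.
have hs := sqr_sqrtr (addr_ge0 (sqr_ge0 d) (sqr_ge0 e)).
have hs0 := sqrtr_ge0 (d ^+ 2 + e ^+ 2).
rewrite ler_norml; apply/andP; split; nra.
Qed.

Lemma Czero {R : realType} {V : lmodType R[i]} {ip : V -> V -> R[i]}
  (Hip : inner_product ip) (S0 A0 C0 : V -> V) (lC : lin C0)
  (sA0 : self_adjoint ip A0) (sC0 : self_adjoint ip C0)
  (pS : positive_op ip S0) (dS : forall x, S0 x = A0 x + ('i)%C *: C0 x) :
  forall x, S0 x = A0 x.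
Proof.
have H2 : forall x y, ip y x = Num.conj (ip x y) by case: Hip.
have qC0 : forall x y, Qf ip (C0 x) y = Qf ip x (C0 y) by move=> x y; rewrite /Qf sC0.
have hq : forall y, Qf ip (C0 y) y = 0.
  move=> y. have [h _] := cge0 _ (pS y).
  rewrite dS (ipDl Hip) (ipZl Hip) cImD cImMi in h.
  have e : ip (A0 y) y = Num.conj (ip (A0 y) y) := etrans (sA0 y y) (H2 (A0 y) y).
  have := congr1 (@complex.Im R) e. rewrite cImJ /Qf. lra.
move=> x.
have hb : Qf ip (C0 x) (C0 x) <= 0 ^+ 2 * Qf ip x x.
  by apply: (opbound Hip C0 0 lC qC0) => y; rewrite hq mul0r ?oppr0.
have hb' : Qf ip (C0 x) (C0 x) <= 0 by rewrite expr0n mul0r in hb.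
have h0 : C0 x = 0 by apply: (Neq0 Hip); apply/eqP; rewrite eq_le hb' (Nge0 Hip).
by rewrite dS h0 scaler0 addr0.
Qed.

Lemma shift {R : realType} {V : lmodType R[i]} {ip : V -> V -> R[i]}
  (Hip : inner_product ip) (A0 : V -> V) (a1 a2 : R) (lA0 : lin A0)
  (sA0 : self_adjoint ip A0) (g1 : op_ge ip A0 a1) (g2 : op_le ip A0 a2) :
  forall y, hnorm ip (A0 y - ((((a1 + a2) / 2)%:C)%C *: y)) <= `|(a2 - a1) / 2| * hnorm ip y.
Proof.
have qA0 : forall x y, Qf ip (A0 x) y = Qf ip x (A0 y) by move=> x y; rewrite /Qf sA0.
move=> y.
set m := (a1 + a2) / 2. set k := (a2 - a1) / 2.
have lo : forall x, 0 <= Qf ip (A0 x) x - a1 * Qf ip x x.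
  move=> x. have h : 0 <= Qf ip (A0 x - (a1%:C)%C *: x) x := (cge0 _ (g1 x)).2.
  by rewrite (QBl Hip) (QZl Hip) in h.
have hi : forall x, 0 <= a2 * Qf ip x x - Qf ip (A0 x) x.
  move=> x. have h : 0 <= Qf ip ((a2%:C)%C *: x - A0 x) x := (cge0 _ (g2 x)).2.
  by rewrite (QBl Hip) (QZl Hip) in h.
have hb : Qf ip (A0 y - (m%:C)%C *: y) (A0 y - (m%:C)%C *: y) <= k ^+ 2 * Qf ip y y.
  apply: (opbound Hip (fun y => A0 y - (m%:C)%C *: y) k (linS _ lA0)) => [x z|x|x] /=.
  - by rewrite (QBl Hip) (QBr Hip) (QZl Hip) (QZr Hip) qA0.
  - rewrite (QBl Hip) (QZl Hip) /k /m. have := lo x. have := hi x. nra.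
  - rewrite (QBl Hip) (QZl Hip) /k /m. have := lo x. have := hi x. nra.
have : Num.sqrt (Qf ip (A0 y - (m%:C)%C *: y) (A0 y - (m%:C)%C *: y)) <=
       Num.sqrt (k ^+ 2 * Qf ip y y).
  by rewrite ler_sqrt // mulr_ge0 // ?sqr_ge0 // (Nge0 Hip).
by rewrite sqrtrM ?sqr_ge0 // sqrtr_sqr.
Qed.

Theorem mainTheorem1 (R : realType) (V : lmodType R[i]) (ip : V -> V -> R[i])
  (HH : separable_hilbert_space ip)
  (S T A B C D : V -> V)
  (hS : bounded_op ip S) (hT : bounded_op ip T)
  (posS : positive_op ip S) (posT : positive_op ip T)
  (nS : normal_op ip S) (nT : normal_op ip T)
  (hA : bounded_op ip A) (hB : bounded_op ip B)
  (hC : bounded_op ip C) (hD : bounded_op ip D)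
  (sA : self_adjoint ip A) (sB : self_adjoint ip B)
  (sC : self_adjoint ip C) (sD : self_adjoint ip D)
  (decS : forall x, S x = A x + ('i)%C *: C x)
  (decT : forall x, T x = B x + ('i)%C *: D x)
  (a1 a2 b1 b2 c1 c2 d1 d2 : R)
  (ha1 : op_ge ip A a1) (ha2 : op_le ip A a2)
  (hb1 : op_ge ip B b1) (hb2 : op_le ip B b2)
  (hc1 : op_ge ip C c1) (hc2 : op_le ip C c2)
  (hd1 : op_ge ip D d1) (hd2 : op_le ip D d2) :
  opnorm ip (fun x => S (T x) - T (S x)) <=
    2^-1 * Num.sqrt ((a2 - a1) ^+ 2 + (c2 - c1) ^+ 2)
         * Num.sqrt ((b2 - b1) ^+ 2 + (d2 - d1) ^+ 2).
Proof.
case: HH => Hip _ _.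
have lA : lin A := proj1 hA. have lB : lin B := proj1 hB.
have lC : lin C := proj1 hC. have lD : lin D := proj1 hD.
have eS := Czero Hip S A C lC sA sC posS decS.
have eT := Czero Hip T B D lD sB sD posT decT.
have qA : forall x y, Qf ip (A x) y = Qf ip x (A y) by move=> x y; rewrite /Qf sA.
have qB : forall x y, Qf ip (B x) y = Qf ip x (B y) by move=> x y; rewrite /Qf sB.
have bX := shift Hip A a1 a2 lA sA ha1 ha2.
have bY := shift Hip B b1 b2 lB sB hb1 hb2.
set mA := (a1 + a2) / 2. set mB := (b1 + b2) / 2.
set kA := (a2 - a1) / 2. set kB := (b2 - b1) / 2.
have key : forall x, hnorm ip (A (B x) - B (A x)) <= 2 * `|kA| * `|kB| * hnorm ip x.
  move=> x.
  apply: (commbound Hip (fun y => A y - (mA%:C)%C *: y) (fun y => B y - (mB%:C)%C *: y))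
    => //=.
  have gen : forall z, Qf ip (B x) (A z) - Qf ip (A x) (B z) =
     Qf ip (B x - (mB%:C)%C *: x) (A z - (mA%:C)%C *: z) -
     Qf ip (A x - (mA%:C)%C *: x) (B z - (mB%:C)%C *: z).
    move=> z. rewrite !(QBl Hip) !(QBr Hip) !(QZl Hip) !(QZr Hip) (qB x z) (qA x z). ring.
  by rewrite -gen (QBl Hip) (qA (B x)) (qB (A x)).
have s1 := halfnorm (a2 - a1) (c2 - c1).
have s2 := halfnorm (b2 - b1) (d2 - d1).
rewrite /opnorm. apply: (ge_sup (R:=R)).
  exists (hnorm ip (S (T 0) - T (S 0))), 0; split => //.
  by rewrite /hnorm (ip0l Hip) /= sqrtr0 ler01.
move=> r [x [hx ->]].
rewrite !eS !eT.
have k1 := key x.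
have n1 : 0 <= `|kA| := normr_ge0 _. have n2 : 0 <= `|kB| := normr_ge0 _.
have p1 : `|kA| * `|kB| <= (Num.sqrt ((a2 - a1) ^+ 2 + (c2 - c1) ^+ 2) / 2) *
                          (Num.sqrt ((b2 - b1) ^+ 2 + (d2 - d1) ^+ 2) / 2).
  by apply: ler_pM.
have p0 : 0 <= `|kA| * `|kB| by rewrite mulr_ge0.
have g := hn_ge0 (ip := ip) x.
have : `|kA| * `|kB| * hnorm ip x <= `|kA| * `|kB| by nra.
lra.
Qed.
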